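(* Fix a robot $k$ and a group $G_{\hat k}$, $\hat k\in\{1,\dots,m-1\}$, containing $k$, whose other members are $l_1,\dots,l_j$ with $j\ge 2$. Let $d>0$ and let $\mathrm{Rot}_{l_1,l_2,k}(\pi,\pi,0)$ denote any composition of the rotation-only operations $h_1,\dots,h_{m-1},f_m$ that changes the orientations of $l_1$ and $l_2$ by $\pi$ and that of $k$ by $0$ (mod $2\pi$), leaving all positions unchanged (such a composition exists). Then the sequence $P_1(d)=(g_{\hat k}(d),\,\mathrm{Rot}_{l_1,l_2,k}(\pi,\pi,0),\,g_{\hat k}(d))$ has the following net effect: every robot not in $G_{\hat k}$ has unchanged position; robots $l_1$ and $l_2$ end at their initial positions; robot $k$ is translated by $2d(\cos\theta_k,\sin\theta_k)$ (with $\theta_k$ its initial orientation) and has unchanged orientation. Thus only robots among $l_3,\dots,l_j,k$ can change position.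
   Context: A swarm of $n$ planar robots; robot $j$ has state $(x_j,y_j,\theta_j)$, $\theta_j$ mod $2\pi$; all robots have the same turning radius $r>0$. Groups $G_1,\dots,G_m$ with activation vectors $\alpha_i\in\{0,1\}^n$ ($\alpha_{i,j}=1$ iff robot $j\in G_i$); the patterns $(\alpha_{1,j},\dots,\alpha_{m-1,j})$ are pairwise distinct, none all zeros, none all ones; $G_m=\emptyset$. Dynamics: one group $\nu(t)$ active at a time, input $u(t)>0$; with $a_j=\alpha_{\nu(t),j}$: $\dot x_j=a_j\cos\theta_j u$, $\dot y_j=a_j\sin\theta_j u$, $\dot\theta_j=(1-a_j)u/r$. $f_m(\varphi)$ = activate $G_m$ with $\int u\,dt=r\varphi$ (all robots rotate in place by $\varphi$). $h_i(\varphi)$ ($i<m$): an activation sequence whose net effect leaves members of $G_i$ unchanged and keeps non-members in place with orientation increased by $\varphi$ mod $2\pi$. $g_i(d)$ ($i<m$, $d\in\mathbb R$): an activation sequence whose net effect translates each member $j$ of $G_i$ by $d(\cos\theta_j,\sin\theta_j)$ with unchanged orientation and leaves non-members unchanged. Sequences are executed left to right. *)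

(* Defs.v *)
From Stdlib Require Import Reals Lra List ZArith.
Open Scope R_scope.

(* State of one robot: position (px,py), orientation th (a real, read mod 2*PI). *)
Record rstate := mkR { px : R; py : R; th : R }.

(* Configuration of the swarm: robot j (0 <= j < n) has state c j. *)
Definition config := nat -> rstate.

Definition angle_eq (a b : R) : Prop := exists z : Z, a = b + 2 * PI * IZR z.

(* Activation vectors: alpha i j = true iff robot j belongs to group G_i
   (groups indexed 1..m). *)

(* Exact effect of activating group i with integral of u equal to U (> 0):
   this is the exact solution of the dynamics on that interval, since members
   keep their orientation and non-members keep their position. *)
Definition step (alpha : nat -> nat -> bool) (r : R) (i : nat) (U : R)
  (c : config) : config :=
  fun j => let s := c j in
    if alpha i j
    then mkR (px s + U * cos (th s)) (py s + U * sin (th s)) (th s)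
    else mkR (px s) (py s) (th s + U / r).

(* An activation sequence: list of (group index, integral of u), executed
   left to right. *)
Definition actseq := list (nat * R).

Definition run (alpha : nat -> nat -> bool) (r : R) (sq : actseq) (c : config)
  : config :=
  fold_left (fun c p => step alpha r (fst p) (snd p) c) sq c.

Definition valid_seq (m : nat) (sq : actseq) : Prop :=
  Forall (fun p => (1 <= fst p <= m)%nat /\ 0 < snd p) sq.

Definition groups_ok (n m : nat) (alpha : nat -> nat -> bool) : Prop :=
  (2 <= m)%nat /\
  (forall j, (j < n)%nat -> alpha m j = false) /\
  (forall j1 j2, (j1 < n)%nat -> (j2 < n)%nat -> j1 <> j2 ->
     exists i, (1 <= i <= m - 1)%nat /\ alpha i j1 <> alpha i j2) /\
  (forall j, (j < n)%nat ->
     (exists i, (1 <= i <= m - 1)%nat /\ alpha i j = true) /\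
     (exists i, (1 <= i <= m - 1)%nat /\ alpha i j = false)).

Definition is_g (n m : nat) (alpha : nat -> nat -> bool) (r : R)
  (i : nat) (d : R) (sq : actseq) : Prop :=
  valid_seq m sq /\
  forall (c : config) j, (j < n)%nat ->
    let c' := run alpha r sq c in
    if alpha i j then
      px (c' j) = px (c j) + d * cos (th (c j)) /\
      py (c' j) = py (c j) + d * sin (th (c j)) /\
      angle_eq (th (c' j)) (th (c j))
    else
      px (c' j) = px (c j) /\ py (c' j) = py (c j) /\
      angle_eq (th (c' j)) (th (c j)).

Definition is_h (n m : nat) (alpha : nat -> nat -> bool) (r : R)
  (i : nat) (phi : R) (sq : actseq) : Prop :=
  valid_seq m sq /\
  forall (c : config) j, (j < n)%nat ->
    let c' := run alpha r sq c in
    px (c' j) = px (c j) /\ py (c' j) = py (c j) /\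
    (if alpha i j then angle_eq (th (c' j)) (th (c j))
     else angle_eq (th (c' j)) (th (c j) + phi)).

Definition f_seq (m : nat) (r phi : R) : actseq := (m, r * phi) :: nil.

Definition is_rot_composition (n m : nat) (alpha : nat -> nat -> bool) (r : R)
  (sq : actseq) : Prop :=
  exists pieces : list actseq,
    sq = concat pieces /\
    Forall (fun p =>
      (exists i phi, (1 <= i <= m - 1)%nat /\ is_h n m alpha r i phi p) \/
      (exists phi, 0 < phi /\ p = f_seq m r phi)) pieces.

Definition is_Rot_pi_pi_0 (n m : nat) (alpha : nat -> nat -> bool) (r : R)
  (l1 l2 k : nat) (sq : actseq) : Prop :=
  is_rot_composition n m alpha r sq /\
  forall c : config,
    let c' := run alpha r sq c in
    (forall j, (j < n)%nat -> px (c' j) = px (c j) /\ py (c' j) = py (c j)) /\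
    angle_eq (th (c' l1)) (th (c l1) + PI) /\
    angle_eq (th (c' l2)) (th (c l2) + PI) /\
    angle_eq (th (c' k)) (th (c k)).

(* Main.v *)
Require Import Defs.
From Stdlib Require Import Reals List ZArith Lra.
Open Scope R_scope.

Lemma per2 (z : Z) : cos (2 * PI * IZR z) = 1 /\ sin (2 * PI * IZR z) = 0.
Proof.
  assert (H0 : sin (PI * IZR z) = 0).
  { apply sin_eq_0_1. exists z. ring. }
  replace (2 * PI * IZR z) with (2 * (PI * IZR z)) by ring.
  rewrite cos_2a_sin, sin_2a, H0. split; ring.
Qed.

Lemma ang_cs a b : angle_eq a b -> cos a = cos b /\ sin a = sin b.
Proof.
  intros [z ->]. destruct (per2 z) as [C S].
  rewrite cos_plus, sin_plus, C, S. split; ring.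
Qed.

Lemma ang_trans a b c : angle_eq a b -> angle_eq b c -> angle_eq a c.
Proof.
  intros [z1 H1] [z2 H2]. exists (z1 + z2)%Z. rewrite plus_IZR. subst. ring.
Qed.

Lemma ang_plus a b p : angle_eq a b -> angle_eq (a + p) (b + p).
Proof. intros [z H]. exists z. subst. ring. Qed.

Lemma run_app alpha r s1 s2 c : run alpha r (s1 ++ s2) c = run alpha r s2 (run alpha r s1 c).
Proof. unfold run. apply fold_left_app. Qed.

Theorem mainTheorem5 (n m : nat) (alpha : nat -> nat -> bool) (r : R)
  (Hr : 0 < r) (Hgroups : groups_ok n m alpha)
  (k khat l1 l2 : nat)
  (Hkhat : (1 <= khat <= m - 1)%nat)
  (Hk : (k < n)%nat) (Hl1 : (l1 < n)%nat) (Hl2 : (l2 < n)%nat)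
  (Hl12 : l1 <> l2) (Hl1k : l1 <> k) (Hl2k : l2 <> k)
  (Hmk : alpha khat k = true) (Hm1 : alpha khat l1 = true)
  (Hm2 : alpha khat l2 = true)
  (d : R) (Hd : 0 < d)
  (g rot : actseq)
  (Hg : is_g n m alpha r khat d g)
  (Hrot : is_Rot_pi_pi_0 n m alpha r l1 l2 k rot) :
  forall c : config,
    let c' := run alpha r (g ++ rot ++ g) c in
    (forall j, (j < n)%nat -> alpha khat j = false ->
       px (c' j) = px (c j) /\ py (c' j) = py (c j)) /\
    (px (c' l1) = px (c l1) /\ py (c' l1) = py (c l1)) /\
    (px (c' l2) = px (c l2) /\ py (c' l2) = py (c l2)) /\
    (px (c' k) = px (c k) + 2 * d * cos (th (c k)) /\
     py (c' k) = py (c k) + 2 * d * sin (th (c k)) /\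
     angle_eq (th (c' k)) (th (c k))).
Proof.
  intros c c'. subst c'. repeat rewrite run_app.
  set (c1 := run alpha r g c).
  set (c2 := run alpha r rot c1).
  destruct Hg as [_ Hg]. destruct Hrot as [_ Hrot].
  destruct (Hrot c1) as [Rpos [R1 [R2 Rk]]]. fold c2 in Rpos, R1, R2, Rk.
  assert (Hl : forall l, (l < n)%nat -> alpha khat l = true ->
            angle_eq (th (c2 l)) (th (c1 l) + PI) ->
            px (run alpha r g c2 l) = px (c l) /\ py (run alpha r g c2 l) = py (c l)).
  { intros l Hln Hal HR.
    pose proof (Hg c l Hln) as A. pose proof (Hg c2 l Hln) as B.
    cbv zeta in A, B. rewrite Hal in A, B. fold c1 in A.
    destruct A as [A1 [A2 A3]]. destruct B as [B1 [B2 B3]].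
    destruct (Rpos l Hln) as [P1 P2].
    assert (E : angle_eq (th (c2 l)) (th (c l) + PI)).
    { eapply ang_trans. exact HR. apply ang_plus. exact A3. }
    destruct (ang_cs _ _ E) as [Ec Es].
    rewrite neg_cos in Ec. rewrite neg_sin in Es.
    rewrite B1, B2, P1, P2, A1, A2, Ec, Es. split; ring. }
  split; [|split; [|split]].
  - intros j Hj Ha.
    pose proof (Hg c j Hj) as A. pose proof (Hg c2 j Hj) as B.
    cbv zeta in A, B. rewrite Ha in A, B. fold c1 in A.
    destruct A as [A1 [A2 _]]. destruct B as [B1 [B2 _]].
    destruct (Rpos j Hj) as [P1 P2].
    rewrite B1, B2, P1, P2, A1, A2. split; reflexivity.
  - apply Hl; assumption.
  - apply Hl; assumption.
  - pose proof (Hg c k Hk) as A. pose proof (Hg c2 k Hk) as B.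
    cbv zeta in A, B. rewrite Hmk in A, B. fold c1 in A.
    destruct A as [A1 [A2 A3]]. destruct B as [B1 [B2 B3]].
    destruct (Rpos k Hk) as [P1 P2].
    assert (E : angle_eq (th (c2 k)) (th (c k))).
    { eapply ang_trans. exact Rk. exact A3. }
    destruct (ang_cs _ _ E) as [Ec Es].
    rewrite B1, B2, P1, P2, A1, A2, Ec, Es. split; [ring|split; [ring|]].
    eapply ang_trans. exact B3. exact E.
Qed.
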